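(* Assume $\kappa=\kappa^{<\kappa}$. For every point $x$ of $S_\kappa$, the subspace $S_\kappa\setminus\{x\}$ is not $C^*$-embedded in $S_\kappa$, i.e. there is a bounded continuous real-valued function on $S_\kappa\setminus\{x\}$ that has no continuous extension to $S_\kappa$.
   Context: A space is zero-dimensional if it has a base of clopen sets. For a zero-dimensional space $X$ and an open $U\subseteq X$, the ($X$-)type $\tau(U)$ is the least cardinal $\tau$ such that $U$ is a union of $\tau$ many clopen subsets of $X$. A zero-dimensional space is an $F_\kappa$-space if every open subset of type less than $\kappa$ is $C^*$-embedded (every bounded continuous real-valued function on it extends continuously to the whole space). A space is a $G_\kappa$-space if every non-empty intersection of fewer than $\kappa$ open sets has non-empty interior. A $\kappa$-Parovičenko space is a compact Hausdorff zero-dimensional $F_\kappa$- and $G_\kappa$-space without isolated points (no weight restriction is imposed). If $\kappa=\kappa^{<\kappa}$ there is, up to homeomorphism, a unique $\kappa$-Parovičenko space of weight $\kappa$; it is denoted $S_\kappa$. *)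

(* Defs.v *)
From Stdlib Require Import Reals List.
Open Scope R_scope.

Record TopSpace := {
  carrier :> Type;
  open : (carrier -> Prop) -> Prop;
  open_full : open (fun _ => True);
  open_inter : forall U V, open U -> open V -> open (fun x => U x /\ V x);
  open_union : forall F : (carrier -> Prop) -> Prop,
      (forall U, F U -> open U) -> open (fun x => exists U, F U /\ U x)
}.

Arguments open {t} _.

Definition closed {X : TopSpace} (A : X -> Prop) : Prop := open (fun x => ~ A x).
Definition clopen {X : TopSpace} (A : X -> Prop) : Prop := open A /\ closed A.

Definition card_le (A B : Type) : Prop := exists f : A -> B, forall a a', f a = f a' -> a = a'.
Definition card_lt (A B : Type) : Prop := card_le A B /\ ~ card_le B A.
Definition card_eq (A B : Type) : Prop := card_le A B /\ card_le B A.

Definition infinite_card (K : Type) : Prop := card_le nat K.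

(** kappa^{<kappa} = kappa, i.e. kappa^lambda <= kappa for all lambda < kappa *)
Definition kappa_lt_kappa_eq (K : Type) : Prop :=
  forall L : Type, card_lt L K -> card_le (L -> K) K.

Definition compact (X : TopSpace) : Prop :=
  forall F : (X -> Prop) -> Prop,
    (forall U, F U -> open U) ->
    (forall x : X, exists U, F U /\ U x) ->
    exists l : list (X -> Prop),
      (forall U, In U l -> F U) /\ (forall x : X, exists U, In U l /\ U x).

Definition hausdorff (X : TopSpace) : Prop :=
  forall x y : X, x <> y ->
    exists U V, open U /\ open V /\ U x /\ V y /\ (forall z, ~ (U z /\ V z)).

Definition zero_dimensional (X : TopSpace) : Prop :=
  forall (U : X -> Prop) (x : X), open U -> U x ->
    exists C, clopen C /\ C x /\ (forall y, C y -> U y).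

Definition is_base (X : TopSpace) (B : (X -> Prop) -> Prop) : Prop :=
  (forall U, B U -> open U) /\
  (forall (U : X -> Prop) (x : X), open U -> U x ->
     exists V, B V /\ V x /\ (forall y, V y -> U y)).

Definition weight_eq (X : TopSpace) (K : Type) : Prop :=
  (exists B, is_base X B /\ card_eq {U : X -> Prop | B U} K) /\
  (forall B, is_base X B -> card_le K {U : X -> Prop | B U}).

Definition no_isolated_points (X : TopSpace) : Prop :=
  forall x : X, ~ open (fun y => y = x).

Definition sub_continuous {X : TopSpace} (A : X -> Prop) (f : {x | A x} -> R) : Prop :=
  forall (a : {x | A x}) (eps : R), eps > 0 ->
    exists U : X -> Prop, open U /\ U (proj1_sig a) /\
      forall b : {x | A x}, U (proj1_sig b) -> Rabs (f b - f a) < eps.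

Definition continuous_fun {X : TopSpace} (g : X -> R) : Prop :=
  forall (a : X) (eps : R), eps > 0 ->
    exists U : X -> Prop, open U /\ U a /\ forall b, U b -> Rabs (g b - g a) < eps.

Definition bounded_fun {T : Type} (f : T -> R) : Prop :=
  exists M : R, forall t, Rabs (f t) <= M.

Definition C_star_embedded {X : TopSpace} (A : X -> Prop) : Prop :=
  forall f : {x | A x} -> R, bounded_fun f -> sub_continuous A f ->
    exists g : X -> R, continuous_fun g /\ forall a : {x | A x}, g (proj1_sig a) = f a.

Definition type_lt (X : TopSpace) (K : Type) (U : X -> Prop) : Prop :=
  exists (I : Type) (C : I -> X -> Prop), card_lt I K /\
    (forall i, clopen (C i)) /\
    (forall x, U x <-> exists i, C i x).

Definition F_kappa (X : TopSpace) (K : Type) : Prop :=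
  zero_dimensional X /\
  forall U : X -> Prop, open U -> type_lt X K U -> C_star_embedded U.

Definition G_kappa (X : TopSpace) (K : Type) : Prop :=
  forall (I : Type) (U : I -> X -> Prop), card_lt I K ->
    (forall i, open (U i)) ->
    (exists x, forall i, U i x) ->
    exists V : X -> Prop, open V /\ (exists x, V x) /\
      (forall y, V y -> forall i, U i y).

Definition kappa_Parovicenko (X : TopSpace) (K : Type) : Prop :=
  compact X /\ hausdorff X /\ zero_dimensional X /\
  F_kappa X K /\ G_kappa X K /\ no_isolated_points X.

(* Main.v *)
Require Import Defs.
From Stdlib Require Import Reals List.
From Stdlib Require Import Lra Classical ClassicalEpsilon FunctionalExtensionality PropExtensionality ProofIrrelevance Wellfounded.

Module WOM.
From mathcomp Require Import ssreflect ssrfun ssrbool eqtype ssrnat seq.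
From mathcomp Require Import boolp wochoice.

Lemma wo_exists (K : Type) : exists lt : K -> K -> Prop,
  well_founded lt /\ (forall a b, lt a b \/ a = b \/ lt b a) /\
  (forall a b c, lt a b -> lt b c -> lt a c) /\ (forall a, ~ lt a a).
Proof.
have [R wR] := @well_ordering_principle {classic K}.
have refl : forall a : K, R a a.
  move=> a; have [|z [[Hz Hl] _]] := wR (pred1 (a : {classic K})).
    by exists a; rewrite inE.
  by move: Hz Hl; rewrite inE => /eqP -> Hl; apply: Hl; rewrite inE.
have anti : forall a b : K, R a b -> R b a -> a = b.
  move=> a b Hab Hba.
  have [|z [_ Hu]] := wR (pred2 (a : {classic K}) b).
    by exists a; rewrite inE eqxx.
  have ea : z = a.
    apply: Hu; split; first by rewrite inE eqxx.
    by move=> y; rewrite inE => /orP[]/eqP ->.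
  have eb : z = b.
    apply: Hu; split; first by rewrite inE eqxx orbT.
    by move=> y; rewrite inE => /orP[]/eqP ->.
  by rewrite -ea -eb.
have tot : forall a b : K, R a b \/ R b a.
  move=> a b; have [|z [[Hz Hl] _]] := wR (pred2 (a : {classic K}) b).
    by exists a; rewrite inE eqxx.
  move: Hz Hl; rewrite inE => /orP[]/eqP -> Hl.
    by left; apply: Hl; rewrite inE eqxx orbT.
  by right; apply: Hl; rewrite inE eqxx.
have trans : forall a b c : K, R a b -> R b c -> R a c.
  move=> a b c Hab Hbc.
  have [|z [[Hz Hl] _]] := wR (pred3 (a : {classic K}) b c).
    by exists a; rewrite inE eqxx.
  have Hzb : R z b by apply: Hl; rewrite inE eqxx orbT.
  move: Hz; rewrite inE => /orP[/eqP ez|/orP[/eqP ez|/eqP ez]].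
  - by rewrite ez in Hl; apply: Hl; rewrite !inE eqxx !orbT.
  - rewrite ez in Hl; have Hba : R b a by apply: Hl; rewrite inE eqxx.
    by rewrite (anti _ _ Hab Hba).
  - by rewrite ez in Hzb; rewrite (anti _ _ Hbc Hzb) in Hab.
exists (fun a b => R a b /\ a <> b); split; last split; last split.
- move=> a; apply: contrapT => nacc.
  have [|m [[Hm Hl] _]] := wR [pred y : {classic K} | `[< ~ Acc (fun a b => R a b /\ a <> b) y >]].
    by exists a; rewrite inE; apply/asboolP.
  move: Hm; rewrite inE => /asboolP; apply; constructor => y [Hym Hne].
  apply: contrapT => ny; apply: Hne; apply: anti => //; apply: Hl.
  by rewrite inE; apply/asboolP.
- move=> a b; case: (tot a b) => H.
  + by case: (pselect (a = b)) => e; [right; left| left].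
  + by case: (pselect (a = b)) => e; [right; left| right; right; split => // ?; apply: e].
- move=> a b c [Hab nab] [Hbc nbc]; split; first exact: trans Hab Hbc.
  by move=> eac; rewrite eac in Hab; apply: nbc; apply: anti.
- by move=> a [].
Qed.

End WOM.
Import WOM.

Open Scope R_scope.

Lemma open_ext {X : TopSpace} (U V : X -> Prop) :
  (forall z, U z <-> V z) -> open U -> open V.
Proof.
  intros H HU. assert (E : U = V).
  { apply functional_extensionality; intro z; apply propositional_extensionality; apply H. }
  rewrite <- E; exact HU.
Qed.

Lemma open_local {X : TopSpace} (A : X -> Prop) :
  (forall z, A z -> exists U, open U /\ U z /\ forall w, U w -> A w) -> open A.
Proof.
  intros H.
  apply (open_ext (fun z => exists U, (open U /\ forall w, U w -> A w) /\ U z)).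
  - intro z; split.
    + intros [U [[_ HU] Uz]]; auto.
    + intros Az; destruct (H z Az) as [U [? [? ?]]]; eauto.
  - apply open_union. intros U [? _]; auto.
Qed.

Lemma open_empty {X : TopSpace} : open (fun _ : X => False).
Proof. apply open_local; intros z []. Qed.

Lemma open_or {X : TopSpace} (U V : X -> Prop) :
  open U -> open V -> open (fun z => U z \/ V z).
Proof.
  intros HU HV; apply open_local; intros z [Hz|Hz]; [exists U|exists V]; auto.
Qed.

Lemma clopen_open {X : TopSpace} (U : X -> Prop) : clopen U -> open U.
Proof. intros [H _]; exact H. Qed.

Lemma clopen_not {X : TopSpace} (U : X -> Prop) : clopen U -> clopen (fun z => ~ U z).
Proof.
  intros [H1 H2]; split; [exact H2|].
  unfold closed. apply (open_ext U); [|exact H1].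
  intro z; split; [tauto|apply NNPP].
Qed.

Lemma clopen_and {X : TopSpace} (U V : X -> Prop) :
  clopen U -> clopen V -> clopen (fun z => U z /\ V z).
Proof.
  intros [U1 U2] [V1 V2]; split; [apply open_inter; auto|].
  unfold closed. apply (open_ext (fun z => ~ U z \/ ~ V z)); [|apply open_or; auto].
  intro z; tauto.
Qed.

Lemma clopen_or {X : TopSpace} (U V : X -> Prop) :
  clopen U -> clopen V -> clopen (fun z => U z \/ V z).
Proof.
  intros [U1 U2] [V1 V2]; split; [apply open_or; auto|].
  unfold closed. apply (open_ext (fun z => ~ U z /\ ~ V z)); [|apply open_inter; auto].
  intro z; tauto.
Qed.

Lemma clopen_empty {X : TopSpace} : clopen (fun _ : X => False).
Proof.
  split; [apply open_empty|]. unfold closed.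
  apply (open_ext (fun _ => True)); [|apply open_full]. intro; tauto.
Qed.

Lemma clopen_list {X : TopSpace} (P : (X -> Prop) -> Prop) (l : list (X -> Prop)) :
  (forall U, P U -> clopen U) -> clopen (fun z => exists U, In U l /\ P U /\ U z).
Proof.
  intros HP; induction l as [|a l IH].
  - assert (E : (fun z : X => exists U, In U nil /\ P U /\ U z) = (fun _ => False)).
    { apply functional_extensionality; intro z; apply propositional_extensionality.
      split; [intros [U [[] _]]|intros []]. }
    rewrite E; apply clopen_empty.
  - destruct (classic (P a)) as [Pa|nPa].
    + assert (E : (fun z : X => exists U, In U (a :: l) /\ P U /\ U z) =
                  (fun z => a z \/ exists U, In U l /\ P U /\ U z)).
      { apply functional_extensionality; intro z; apply propositional_extensionality.
        split.
        - intros [U [[<-|HU] [PU Uz]]]; [left; auto|right; eauto].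
        - intros [Hz|[U [HU [PU Uz]]]]; [exists a; simpl; auto|exists U; simpl; auto]. }
      rewrite E; apply clopen_or; auto.
    + assert (E : (fun z : X => exists U, In U (a :: l) /\ P U /\ U z) =
                  (fun z => exists U, In U l /\ P U /\ U z)).
      { apply functional_extensionality; intro z; apply propositional_extensionality.
        split.
        - intros [U [[<-|HU] [PU Uz]]]; [contradiction|eauto].
        - intros [U [HU [PU Uz]]]; exists U; simpl; auto. }
      rewrite E; exact IH.
Qed.

Lemma clopen_between (X : TopSpace) : Defs.compact X -> zero_dimensional X ->
  forall F W : X -> Prop, closed F -> open W -> (forall z, F z -> W z) ->
  exists s, clopen s /\ (forall z, F z -> s z) /\ (forall z, s z -> W z).
Proof.
  intros Hc Hz F W HF HW HFW.
  set (P := fun U : X -> Prop => clopen U /\ forall w, U w -> W w).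
  destruct (Hc (fun U => P U \/ U = (fun z => ~ F z))) as [l [Hl1 Hl2]].
  - intros U [[[H _] _]| ->]; auto.
  - intro z. destruct (classic (F z)) as [Fz|nFz].
    + destruct (Hz W z HW (HFW z Fz)) as [C [HC [Cz CW]]].
      exists C; split; auto. left; split; auto.
    + exists (fun z => ~ F z); auto.
  - exists (fun z => exists U, In U l /\ P U /\ U z); split; [|split].
    + apply clopen_list. intros U [H _]; exact H.
    + intros z Fz. destruct (Hl2 z) as [U [HU Uz]].
      destruct (Hl1 U HU) as [PU| ->]; [exists U; auto|contradiction].
    + intros z [U [_ [[_ H] Uz]]]; auto.
Qed.

Lemma open_lt {X : TopSpace} (g : X -> R) (a : R) :
  continuous_fun g -> open (fun z => g z < a).
Proof.
  intros Hg; apply open_local; intros z Hz.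
  destruct (Hg z (a - g z)) as [U [HU [Uz HUb]]]; [lra|].
  exists U; split; [|split]; auto. intros w Uw; specialize (HUb w Uw).
  apply Rabs_def2 in HUb; lra.
Qed.

Lemma open_gt {X : TopSpace} (g : X -> R) (a : R) :
  continuous_fun g -> open (fun z => a < g z).
Proof.
  intros Hg; apply open_local; intros z Hz.
  destruct (Hg z (g z - a)) as [U [HU [Uz HUb]]]; [lra|].
  exists U; split; [|split]; auto. intros w Uw; specialize (HUb w Uw).
  apply Rabs_def2 in HUb; lra.
Qed.

Lemma other_point {X : TopSpace} : no_isolated_points X ->
  forall (V : X -> Prop) w p, open V -> V w -> exists y, V y /\ y <> p.
Proof.
  intros Hni V w p HV Vw. apply NNPP; intro Hn.
  assert (Hall : forall y, V y -> y = p).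
  { intros y Vy; apply NNPP; intro; apply Hn; eauto. }
  apply (Hni p). apply (open_ext V); [|exact HV].
  intro y; split; [apply Hall|intros ->; rewrite <- (Hall w Vw); exact Vw].
Qed.

Lemma open_neq {X : TopSpace} : hausdorff X -> forall p : X, open (fun y => y <> p).
Proof.
  intros Hh p; apply open_local; intros z Hz.
  destruct (Hh z p Hz) as [U [V [HU [HV [Uz [Vp Hd]]]]]].
  exists U; split; [|split]; auto. intros w Uw ->; apply (Hd p); auto.
Qed.

Lemma two_points {X : TopSpace} (x : X) : no_isolated_points X -> hausdorff X ->
  zero_dimensional X -> forall V : X -> Prop, open V -> (exists w, V w) ->
  exists d1 d2 : X -> Prop, clopen d1 /\ clopen d2 /\ (exists z, d1 z) /\ (exists z, d2 z) /\
    (forall z, d1 z -> V z) /\ (forall z, d2 z -> V z) /\ ~ d1 x /\ ~ d2 x /\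
    (forall z, d1 z -> d2 z -> False).
Proof.
  intros Hni Hh Hz V HV [w Vw].
  destruct (other_point Hni V w x HV Vw) as [y1 [Vy1 y1x]].
  set (V1 := fun z => V z /\ z <> x).
  assert (HV1 : open V1) by (apply open_inter; auto; apply open_neq; auto).
  destruct (other_point Hni V1 y1 y1 HV1 (conj Vy1 y1x)) as [y2 [[Vy2 y2x] y21]].
  destruct (Hh y2 y1 y21) as [U2 [U1 [HU2 [HU1 [U2y [U1y Hd]]]]]].
  destruct (Hz (fun z => V1 z /\ U1 z) y1) as [d1 [Hd1 [d1y d1s]]].
  { apply open_inter; auto. } { split; [split|]; auto. }
  destruct (Hz (fun z => V1 z /\ U2 z) y2) as [d2 [Hd2 [d2y d2s]]].
  { apply open_inter; auto. } { split; [split|]; auto. }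
  exists d1, d2; split; [|split; [|split; [|split; [|split; [|split; [|split; [|split]]]]]]]; auto.
  - exists y1; auto.
  - exists y2; auto.
  - intros z Hz1; apply d1s; auto.
  - intros z Hz2; apply d2s; auto.
  - intro Hx; destruct (d1s x Hx) as [[_ H] _]; auto.
  - intro Hx; destruct (d2s x Hx) as [[_ H] _]; auto.
  - intros z Hz1 Hz2. apply (Hd z); split; [apply d2s|apply d1s]; auto.
Qed.


Lemma sep_exists (K : Type) (X : TopSpace) : Defs.compact X -> zero_dimensional X -> F_kappa X K ->
  forall (I : Type) (a b : I -> X -> Prop), card_lt I K ->
  (forall k, clopen (a k)) -> (forall k, clopen (b k)) ->
  (forall k k' z, a k z -> b k' z -> False) ->
  exists s, clopen s /\ (forall k z, a k z -> s z) /\ (forall k z, b k z -> s z -> False).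
Proof.
  intros Hc Hz [_ HF] I a b HI Ha Hb Hab.
  set (O := fun z => exists k, a k z \/ b k z).
  assert (HO : open O).
  { apply open_local; intros z [k [Hk|Hk]].
    - exists (a k); split; [apply clopen_open; auto|split; auto]. intros w Hw; exists k; auto.
    - exists (b k); split; [apply clopen_open; auto|split; auto]. intros w Hw; exists k; auto. }
  assert (HT : type_lt X K O).
  { exists I, (fun k z => a k z \/ b k z); split; [auto|split].
    - intro k; apply clopen_or; auto.
    - intro z; unfold O; tauto. }
  set (f := fun p : {z | O z} =>
        if excluded_middle_informative (exists k, a k (proj1_sig p)) then 1 else 0).
  destruct (HF O HO HT f) as [g [Hg Hgf]].
  - exists 1; intro p; unfold f; destruct excluded_middle_informative;
      rewrite ?Rabs_R1, ?Rabs_R0; lra.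
  - intros [p Op] eps Heps; simpl. destruct Op as [k [Hk|Hk]].
    + exists (a k); split; [apply clopen_open; auto|split; auto].
      intros [q Oq] Hq; simpl in Hq; unfold f; simpl.
      destruct excluded_middle_informative as [_|n]; [|exfalso; apply n; eauto].
      destruct excluded_middle_informative as [_|n]; [|exfalso; apply n; eauto].
      replace (1 - 1) with 0 by ring; rewrite Rabs_R0; lra.
    + exists (b k); split; [apply clopen_open; auto|split; auto].
      intros [q Oq] Hq; simpl in Hq; unfold f; simpl.
      destruct excluded_middle_informative as [[k' H]|_]; [exfalso; eapply Hab; eauto|].
      destruct excluded_middle_informative as [[k' H]|_]; [exfalso; eapply Hab; eauto|].
      replace (0 - 0) with 0 by ring; rewrite Rabs_R0; lra.
  - destruct (clopen_between X Hc Hz (fun z => 1 <= g z) (fun z => 1/2 < g z)) as [s [Hs [Hs1 Hs2]]].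
    + unfold closed. apply (open_ext (fun z => g z < 1)); [|apply open_lt; auto].
      intro z; split; lra.
    + apply open_gt; auto.
    + intros; lra.
    + exists s; split; [auto|split].
      * intros k z Hk. apply Hs1.
        assert (Oz : O z) by (exists k; auto).
        pose proof (Hgf (exist _ z Oz)) as E; simpl in E; rewrite E. unfold f; simpl.
        destruct excluded_middle_informative as [_|n]; [lra|exfalso; apply n; eauto].
      * intros k z Hk sz. specialize (Hs2 z sz).
        assert (Oz : O z) by (exists k; auto).
        pose proof (Hgf (exist _ z Oz)) as E; simpl in E; rewrite E in Hs2. unfold f in Hs2; simpl in Hs2.
        destruct excluded_middle_informative as [[k' H]|_]; [eapply Hab; eauto|lra].
Qed.

Definition Spec {X : TopSpace} (x : X) (OI OJ T : X -> Prop)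
  (ij : ((X -> Prop) * (X -> Prop))%type) : Prop :=
  clopen (fst ij) /\ clopen (snd ij) /\ ~ fst ij x /\ ~ snd ij x /\
  (forall z, fst ij z -> snd ij z -> False) /\
  (forall z, fst ij z -> OJ z -> False) /\ (forall z, snd ij z -> OI z -> False) /\
  (T x -> (exists z, fst ij z) /\ (exists z, snd ij z) /\
          (forall z, fst ij z -> T z) /\ (forall z, snd ij z -> T z)) /\
  ((~ T x /\ exists c, clopen c /\ ~ c x /\ forall z, T z -> c z) ->
     forall z, T z -> fst ij z \/ snd ij z).

Lemma stage_exists (K : Type) (X : TopSpace) (x : X) :
  Defs.compact X -> hausdorff X -> zero_dimensional X -> F_kappa X K -> G_kappa X K ->
  no_isolated_points X ->
  forall (I : Type) (a b : I -> X -> Prop) (OI OJ : X -> Prop), card_lt I K ->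
  (forall k, clopen (a k)) -> (forall k, clopen (b k)) ->
  (forall k, ~ a k x) -> (forall k, ~ b k x) ->
  (forall k k' z, a k z -> b k' z -> False) ->
  (forall z, OI z <-> exists k, a k z) -> (forall z, OJ z <-> exists k, b k z) ->
  forall T, open T -> exists ij, Spec x OI OJ T ij.
Proof.
  intros Hc Hh Hz HF HG Hni I a b OI OJ HI Ha Hb Hax Hbx Hab HOI HOJ T HT.
  destruct (classic (T x)) as [Tx|nTx].
  - assert (HV : exists V : X -> Prop, open V /\ (exists w, V w) /\
              forall z, V z -> T z /\ (forall k, ~ a k z) /\ (forall k, ~ b k z)).
    { destruct (classic (exists k : I, True)) as [[k0 _]|nI].
      - destruct (HG I (fun k z => T z /\ ~ a k z /\ ~ b k z) HI) as [V [HV [Vw HVs]]].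
        + intro k; apply open_inter; auto. apply open_inter; [apply (clopen_not _ (Ha k))|apply (clopen_not _ (Hb k))].
        + exists x; intro k; auto.
        + exists V; split; auto; split; auto. intros z Vz; split; [apply (HVs z Vz k0)|].
          split; intro k; apply (HVs z Vz k).
      - exists T; split; auto; split; [exists x; auto|].
        intros z Tz; split; auto; split; intro k; exfalso; apply nI; exists k; auto. }
    destruct HV as [V [HV [Vw HVs]]].
    destruct (two_points x Hni Hh Hz V HV Vw) as [d1 [d2 [H1 [H2 [[z1 Z1] [[z2 Z2] [S1 [S2 [X1 [X2 D]]]]]]]]]].
    exists (d1, d2); unfold Spec; simpl.
    split; [auto|split; [auto|split; [auto|split; [auto|split; [auto|split; [|split; [|split]]]]]]].
    + intros z Hz1 Hz2. apply HOJ in Hz2 as [k Hk]. destruct (HVs z (S1 z Hz1)) as [_ [_ H]]; eapply H; eauto.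
    + intros z Hz1 Hz2. apply HOI in Hz2 as [k Hk]. destruct (HVs z (S2 z Hz1)) as [_ [H _]]; eapply H; eauto.
    + intros _; split; [eauto|split; [eauto|split]].
      * intros z Hz1; apply (HVs z (S1 z Hz1)).
      * intros z Hz1; apply (HVs z (S2 z Hz1)).
    + intros [n _]; contradiction.
  - destruct (classic (exists c, clopen c /\ ~ c x /\ forall z, T z -> c z)) as [[c [Hcc [cx cT]]]|nc].
    + destruct (sep_exists K X Hc Hz HF I a b HI Ha Hb Hab) as [s [Hs [Has Hbs]]].
      exists (fun z => c z /\ s z, fun z => c z /\ ~ s z); unfold Spec; simpl.
      split; [apply clopen_and; auto|].
      split; [apply clopen_and; auto; apply clopen_not; auto|].
      split; [tauto|split; [tauto|split; [tauto|split; [|split; [|split]]]]].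
      * intros z [_ sz] Hz2. apply HOJ in Hz2 as [k Hk]; eapply Hbs; eauto.
      * intros z [_ sz] Hz2. apply HOI in Hz2 as [k Hk]; apply sz; eapply Has; eauto.
      * intro; contradiction.
      * intros _ z Tz. destruct (classic (s z)); [left|right]; split; auto.
    + exists ((fun _ => False), (fun _ => False)); unfold Spec; simpl.
      split; [apply clopen_empty|split; [apply clopen_empty|]].
      split; [tauto|split; [tauto|split; [tauto|split; [tauto|split; [tauto|split]]]]].
      * intro; contradiction.
      * intros [_ H]; contradiction.
Qed.


Lemma sig_eq {A : Type} (P : A -> Prop) (u v : {a : A | P a}) :
  proj1_sig u = proj1_sig v -> u = v.
Proof. destruct u, v; simpl; intros ->; f_equal; apply proof_irrelevance. Qed.

Lemma wf_min {A : Type} (lt : A -> A -> Prop) : well_founded lt ->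
  forall (P : A -> Prop) a, P a -> exists m, P m /\ forall b, lt b m -> ~ P b.
Proof.
  intros wf P a Pa. apply NNPP; intro Hn.
  assert (H : forall c, ~ P c).
  { intro c; induction c as [c IH] using (well_founded_ind wf).
    intro Pc; apply Hn; exists c; split; auto. }
  exact (H a Pa).
Qed.

Lemma initial_order (K : Type) : exists lt : K -> K -> Prop,
  well_founded lt /\ (forall a b, lt a b \/ a = b \/ lt b a) /\
  (forall a b c, lt a b -> lt b c -> lt a c) /\ (forall a, ~ lt a a) /\
  (forall a, ~ card_le K {b | lt b a}).
Proof.
  destruct (wo_exists K) as [lt0 [wf0 [tot0 [tr0 irr0]]]].
  destruct (classic (exists a, card_le K {b | lt0 b a})) as [[a0 Ha0]|Hno].
  - destruct (wf_min lt0 wf0 (fun a => card_le K {b | lt0 b a}) a0 Ha0) as [m [[h Hh] Hm]].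
    exists (fun a b => lt0 (proj1_sig (h a)) (proj1_sig (h b))).
    split; [apply (wf_inverse_image _ _ lt0 (fun a => proj1_sig (h a)) wf0)|].
    split; [|split; [|split]].
    + intros a b. destruct (tot0 (proj1_sig (h a)) (proj1_sig (h b))) as [H|[H|H]]; auto.
      right; left; apply Hh, sig_eq, H.
    + intros a b c; apply tr0.
    + intros a; apply irr0.
    + intros a [k Hk].
      apply (Hm (proj1_sig (h a)) (proj2_sig (h a))).
      exists (fun z => exist (fun c => lt0 c (proj1_sig (h a)))
                        (proj1_sig (h (proj1_sig (k z)))) (proj2_sig (k z))).
      intros z z' E. apply Hk, sig_eq, Hh, sig_eq.
      apply (f_equal (@proj1_sig _ _)) in E; simpl in E; exact E.
  - exists lt0; split; auto; split; auto; split; auto; split; auto.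
    intros a H; apply Hno; eauto.
Qed.


Definition P2 (X : TopSpace) := ((X -> Prop) * (X -> Prop))%type.

Definition step {K : Type} {X : TopSpace} (x : X) (lt : K -> K -> Prop)
  (task : K -> X -> Prop) (a : K) (prev : forall b, lt b a -> P2 X) : P2 X :=
  epsilon (inhabits ((fun _ : X => False), (fun _ : X => False)))
    (fun ij => Spec x (fun z => exists b (h : lt b a), fst (prev b h) z)
                      (fun z => exists b (h : lt b a), snd (prev b h) z) (task a) ij).

Definition seqf {K : Type} {X : TopSpace} (x : X) (lt : K -> K -> Prop)
  (task : K -> X -> Prop) (wf : well_founded lt) : K -> P2 X :=
  Fix wf (fun _ => P2 X) (step x lt task).

Lemma seq_eq {K : Type} {X : TopSpace} (x : X) (lt : K -> K -> Prop)
  (task : K -> X -> Prop) (wf : well_founded lt) (a : K) :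
  seqf x lt task wf a = step x lt task a (fun b _ => seqf x lt task wf b).
Proof.
  unfold seqf. apply (Fix_eq wf (fun _ => P2 X) (step x lt task)). intros c f g H.
  assert (E : f = g).
  { apply functional_extensionality_dep; intro b; apply functional_extensionality_dep; intro h; apply H. }
  rewrite E; reflexivity.
Qed.

Theorem corollary4p2 :
  forall (K : Type), infinite_card K -> kappa_lt_kappa_eq K ->
  forall (X : TopSpace), kappa_Parovicenko X K -> weight_eq X K ->
  forall x : X, ~ C_star_embedded (fun y : X => y <> x).
Proof.
  intros K [nk _] _ X [Hc [Hh [Hz [HF [HG Hni]]]]] [[B [HB [[inj Hinj] _]]] _] x HC.
  set (task := fun k : K => epsilon (inhabits (fun _ : X => False))
     (fun U => (exists u, inj u = k /\ proj1_sig u = U) \/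
               (~ (exists u, inj u = k) /\ U = fun _ => False))).
  assert (Htask : forall k, (exists u, inj u = k /\ proj1_sig u = task k) \/
               (~ (exists u, inj u = k) /\ task k = fun _ => False)).
  { intro k; unfold task; apply epsilon_spec.
    destruct (classic (exists u, inj u = k)) as [[u Hu]|nu].
    - exists (proj1_sig u); left; eauto.
    - exists (fun _ => False); right; auto. }
  assert (Topen : forall k, open (task k)).
  { intro k; destruct (Htask k) as [[u [_ Hu]]|[_ Hu]].
    - rewrite <- Hu; apply (proj1 HB); apply (proj2_sig u).
    - rewrite Hu; apply open_empty. }
  assert (Tsurj : forall U, B U -> exists k, task k = U).
  { intros U HU; exists (inj (exist _ U HU)).
    destruct (Htask (inj (exist _ U HU))) as [[u [Hu1 Hu2]]|[Hn _]].
    - apply Hinj in Hu1; rewrite <- Hu2, Hu1; reflexivity.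
    - exfalso; apply Hn; eauto. }
  destruct (initial_order K) as [lt [wf [tot [tr [irr small]]]]].
  assert (Hsmall : forall a, card_lt {b | lt b a} K).
  { intro a; split; [|apply small]. exists (@proj1_sig _ _); intros u v; apply sig_eq. }
  set (sq := seqf x lt task wf).
  set (OI := fun a z => exists b (h : lt b a), fst (sq b) z).
  set (OJ := fun a z => exists b (h : lt b a), snd (sq b) z).
  set (Inv := fun a => Spec x (OI a) (OJ a) (task a) (sq a)).
  assert (cross : forall b1 b2 z, Inv b1 -> Inv b2 -> fst (sq b1) z -> snd (sq b2) z -> False).
  { intros b1 b2 z I1 I2 H1 H2.
    destruct (tot b1 b2) as [l|[e|l]].
    - destruct I2 as [_ [_ [_ [_ [_ [_ [H _]]]]]]]. apply (H z H2); exists b1, l; exact H1.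
    - subst b2. destruct I1 as [_ [_ [_ [_ [H _]]]]]. exact (H z H1 H2).
    - destruct I1 as [_ [_ [_ [_ [_ [H _]]]]]]. apply (H z H1); exists b2, l; exact H2. }
  assert (inv_all : forall a, Inv a).
  { intro a; induction a as [a IH] using (well_founded_ind wf).
    unfold Inv. change (sq a) with (seqf x lt task wf a). rewrite seq_eq. unfold step. apply epsilon_spec.
    apply (stage_exists K X x Hc Hh Hz HF HG Hni {b | lt b a}
             (fun k => fst (sq (proj1_sig k))) (fun k => snd (sq (proj1_sig k)))).
    - apply Hsmall.
    - intros [b h]; apply (IH b h).
    - intros [b h]; apply (IH b h).
    - intros [b h]; apply (IH b h).
    - intros [b h]; apply (IH b h).
    - intros [b h] [b' h'] z; simpl; apply cross; auto.
    - intro z; split.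
      + intros [b [h Hb]]; exists (exist _ b h); exact Hb.
      + intros [[b h] Hb]; exists b, h; exact Hb.
    - intro z; split.
      + intros [b [h Hb]]; exists (exist _ b h); exact Hb.
      + intros [[b h] Hb]; exists b, h; exact Hb.
    - apply Topen. }
  assert (cover : forall y, y <> x -> exists a, fst (sq a) y \/ snd (sq a) y).
  { intros y yx. destruct (Hh y x yx) as [U [V [HU [HV [Uy [Vx D]]]]]].
    destruct (Hz U y HU Uy) as [c [Hcc [cy cU]]].
    destruct (proj2 HB c y (clopen_open _ Hcc) cy) as [T [BT [Ty Tc]]].
    destruct (Tsurj T BT) as [k Hk].
    exists k. destruct (inv_all k) as [_ [_ [_ [_ [_ [_ [_ [_ H]]]]]]]].
    rewrite Hk in H. apply H; auto. split.
    - intro Tx; apply (D x); split; auto.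
    - exists c; split; auto; split; auto. intro cx; apply (D x); split; auto. }
  set (f := fun p : {y | y <> x} =>
        if excluded_middle_informative (exists a, fst (sq a) (proj1_sig p)) then 1 else 0).
  destruct (HC f) as [g [Hg Hgf]].
  - exists 1; intro p; unfold f; destruct excluded_middle_informative;
      rewrite ?Rabs_R1, ?Rabs_R0; lra.
  - intros [p px] eps Heps; simpl.
    destruct (cover p px) as [a [Ha|Ha]].
    + exists (fst (sq a)); split; [apply clopen_open; apply (inv_all a)|split; auto].
      intros [q qx] Hq; simpl in Hq; unfold f; simpl.
      destruct excluded_middle_informative as [_|n]; [|exfalso; apply n; eauto].
      destruct excluded_middle_informative as [_|n]; [|exfalso; apply n; eauto].
      replace (1 - 1) with 0 by ring; rewrite Rabs_R0; lra.
    + exists (snd (sq a)); split; [apply clopen_open; apply (inv_all a)|split; auto].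
      intros [q qx] Hq; simpl in Hq; unfold f; simpl.
      destruct excluded_middle_informative as [[a' H]|_];
        [exfalso; eapply (cross a' a q); eauto|].
      destruct excluded_middle_informative as [[a' H]|_];
        [exfalso; eapply (cross a' a p); eauto|].
      replace (0 - 0) with 0 by ring; rewrite Rabs_R0; lra.
  - destruct (Hg x (1/2)) as [U [HU [Ux HUb]]]; [lra|].
    destruct (proj2 HB U x HU Ux) as [T [BT [Tx TU]]].
    destruct (Tsurj T BT) as [k Hk].
    destruct (inv_all k) as [_ [_ [X1 [X2 [_ [_ [_ [H _]]]]]]]].
    rewrite Hk in H. destruct (H Tx) as [[z1 Z1] [[z2 Z2] [S1 S2]]].
    assert (z1x : z1 <> x) by (intros ->; auto).
    assert (z2x : z2 <> x) by (intros ->; auto).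
    pose proof (Hgf (exist _ z1 z1x)) as E1; simpl in E1.
    pose proof (Hgf (exist _ z2 z2x)) as E2; simpl in E2.
    unfold f in E1, E2; simpl in E1, E2.
    destruct excluded_middle_informative as [_|n] in E1; [|apply n; eauto].
    destruct excluded_middle_informative as [[a' Ha']|_] in E2;
      [eapply (cross a' k z2); eauto|].
    pose proof (HUb z1 (TU z1 (S1 z1 Z1))) as B1.
    pose proof (HUb z2 (TU z2 (S2 z2 Z2))) as B2.
    rewrite E1 in B1; rewrite E2 in B2.
    apply Rabs_def2 in B1; apply Rabs_def2 in B2; lra.
Qed.
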